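(* Let $n\geq 1$. The map $\Gamma$, sending a cell $\langle c^m,c^M\rangle$ of size $n$ to the $(n-1)$-tuple $(\gamma(c^m_1,c^M_1),\dots,\gamma(c^m_{n-1},c^M_{n-1}))$, where $\gamma(a,b)=a$ if $a<0$ and $\gamma(a,b)=b$ if $a\geq 0$, is a bijection from the set of cells of size $n$ to the set $\mathcal{CC}^{sync}_n$ of synchronized cubic coordinates of size $n$.
   Context: A Tamari diagram of size $n$ is a word $u=u_1\cdots u_n$ of integers with $0\leq u_i\leq n-i$ and $u_{i+j}\leq u_i-j$ for all $i\in[n]$, $0\leq j\leq u_i$. A dual Tamari diagram of size $n$ is a word $v$ of integers with $0\leq v_i\leq i-1$ and $v_{i-j}\leq v_i-j$ for all $i\in[n]$, $0\leq j\leq v_i$. $(u,v)$ is a Tamari interval diagram if moreover for all $1\leq i<j\leq n$ with $j-i\leq u_i$ one has $v_j<j-i$. A cubic coordinate of size $n$ is $c\in\mathbb{Z}^{n-1}$ such that $(u,v)$ with $u_i=\max(c_i,0)$ ($i\in[n-1]$), $u_n=0$, $v_1=0$, $v_i=|\min(c_{i-1},0)|$ ($2\leq i\leq n$) is a Tamari interval diagram; $\mathcal{CC}_n$ denotes their set. A cubic coordinate is synchronized if all its entries are nonzero. For $c\in\mathcal{CC}_n$ and $i\in[n-1]$, the minimal increase $\uparrow_i(c)$ is defined when there exists a cubic coordinate agreeing with $c$ outside position $i$ and with $i$-th entry $>c_i$; then $\uparrow_i(c)$ is the tuple obtained from $c$ by replacing $c_i$ by the smallest integer $t>c_i$ such that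 the result is a cubic coordinate (equivalently, $\uparrow_i(c)$ covers $c$ in the componentwise order on $\mathcal{CC}_n$ and differs from $c$ only at position $i$). $c$ is minimal-cellular if $\uparrow_i(c)$ is defined for every $i\in[n-1]$. For minimal-cellular $c^m$, its maximal-cellular correspondent is $c^M=\uparrow_1(\uparrow_2(\cdots(\uparrow_{n-1}(c^m))\cdots))$ (every step of this composition is defined), and the pair $\langle c^m,c^M\rangle$ is a cell of size $n$. *)

(* Defs.v *)
(* Positions are 1-based as in the paper. *)
From mathcomp Require Import all_boot all_order all_algebra.
Set Implicit Arguments. Unset Strict Implicit. Unset Printing Implicit Defensive.
Import Order.TTheory GRing.Theory Num.Theory.
Local Open Scope ring_scope.

Definition tamari_diagram (n : nat) (u : nat -> int) : Prop :=
  forall i : nat, (1 <= i <= n)%N ->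
    (0 <= u i /\ u i <= (n - i)%:Z) /\
    forall j : nat, j%:Z <= u i -> u (i + j)%N <= u i - j%:Z.

Definition dual_tamari_diagram (n : nat) (v : nat -> int) : Prop :=
  forall i : nat, (1 <= i <= n)%N ->
    (0 <= v i /\ v i <= (i - 1)%:Z) /\
    forall j : nat, j%:Z <= v i -> v (i - j)%N <= v i - j%:Z.

Definition tamari_interval_diagram (n : nat) (u v : nat -> int) : Prop :=
  [/\ tamari_diagram n u, dual_tamari_diagram n v &
      forall i j : nat, (1 <= i)%N -> (i < j)%N -> (j <= n)%N ->
        (j - i)%:Z <= u i -> v j < (j - i)%:Z].

(* c is a tuple (c_1,...,c_{n-1}) stored as a seq int; c_i = nth 0 c (i-1). *)
Definition entry (c : seq int) (i : nat) : int := nth 0 c i.-1.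

Definition u_of (n : nat) (c : seq int) (i : nat) : int :=
  if (i < n)%N then Num.max (entry c i) 0 else 0.

Definition v_of (c : seq int) (i : nat) : int :=
  if (i <= 1)%N then 0 else `|Num.min (entry c i.-1) 0|.

Definition cubic_coordinate (n : nat) (c : seq int) : Prop :=
  size c = n.-1 /\ tamari_interval_diagram n (u_of n c) (v_of c).

Definition synchronized (n : nat) (c : seq int) : Prop :=
  cubic_coordinate n c /\ forall i : nat, (1 <= i <= n.-1)%N -> entry c i != 0.

Definition set_entry (c : seq int) (i : nat) (t : int) : seq int :=
  set_nth 0 c i.-1 t.

Definition up_defined (n : nat) (c : seq int) (i : nat) : Prop :=
  exists t : int, entry c i < t /\ cubic_coordinate n (set_entry c i t).

Definition up_rel (n : nat) (c : seq int) (i : nat) (d : seq int) : Prop :=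
  exists t : int, [/\ d = set_entry c i t, entry c i < t,
    cubic_coordinate n d &
    forall s : int, entry c i < s -> s < t -> ~ cubic_coordinate n (set_entry c i s)].

Definition minimal_cellular (n : nat) (c : seq int) : Prop :=
  cubic_coordinate n c /\ forall i : nat, (1 <= i <= n.-1)%N -> up_defined n c i.

(* ups n c k d : d = \uparrow_1(\uparrow_2(...(\uparrow_k(c))...)) *)
Fixpoint ups (n : nat) (c : seq int) (k : nat) (d : seq int) : Prop :=
  match k with
  | 0 => d = c
  | k'.+1 => exists e : seq int, up_rel n c k'.+1 e /\ ups n e k' d
  end.

Definition maximal_correspondent (n : nat) (cm cM : seq int) : Prop :=
  ups n cm n.-1 cM.

Definition is_cell (n : nat) (cm cM : seq int) : Prop :=
  minimal_cellular n cm /\ maximal_correspondent n cm cM.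

Definition gamma (a b : int) : int := if a < 0 then a else b.

Definition Gamma (cm cM : seq int) : seq int :=
  [seq gamma p.1 p.2 | p <- zip cm cM].

(* Main.v *)
Require Import Defs.
From mathcomp Require Import all_boot all_order all_algebra.
From mathcomp Require Import zify.
From Stdlib Require Import FunctionalExtensionality.
Import Order.TTheory GRing.Theory Num.Theory.
Local Open Scope ring_scope.
Set Implicit Arguments. Unset Strict Implicit. Unset Printing Implicit Defensive.

Definition ent (c : seq int) (p : nat) : int := if p == 0%N then 0 else nth 0 c p.-1.

Definition CCf (n : nat) (f : nat -> int) : Prop :=
 [/\ forall i, (1 <= i <= n.-1)%N -> - (i%:Z) <= f i /\ f i <= n%:Z - i%:Z,
    forall i j, (1 <= i)%N -> (1 <= j)%N -> (i + j <= n.-1)%N -> 0 < f i -> j%:Z <= f i -> f (i+j)%N <= f i - j%:Z,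
    forall i d, (1 <= i)%N -> (1 <= d)%N -> (i + d <= n.-1)%N -> d%:Z < f i -> - d%:Z <= f (i+d)%N &
    forall k j, (1 <= j)%N -> (j < k)%N -> (k <= n.-1)%N -> f k < 0 -> j%:Z <= - f k -> f k + j%:Z <= f (k-j)%N ].

Lemma uE n c i : (1 <= i < n)%N -> u_of n c i = Num.max (ent c i) 0.
Proof. rewrite /u_of /ent /entry => /andP[h1 ->]. by case: i h1. Qed.
Lemma unE n c i : (n <= i)%N -> u_of n c i = 0.
Proof. rewrite /u_of => h. by rewrite ltnNge h. Qed.
Lemma vE c i : (2 <= i)%N -> v_of c i = `|Num.min (ent c i.-1) 0|.
Proof. rewrite /v_of /ent /entry; case: i => [|[|i]] //= _. Qed.
Lemma v1E c : v_of c 1 = 0.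
Proof. by []. Qed.

Lemma CC_CCf n c : cubic_coordinate n c -> size c = n.-1 /\ CCf n (ent c).
Proof.
case=> hs [TD DTD INT]; split=> //; split.
- move=> i /andP[h1 h2].
  have [[_ r1] _] := TD i ltac:(lia).
  have [[_ r2] _] := DTD i.+1 ltac:(lia).
  rewrite uE in r1; last by lia.
  rewrite vE /= in r2; last by lia.
  lia.
- move=> i j h1 h2 h3 h4 h5.
  have [[_ _] t] := TD i ltac:(lia).
  have := t j; rewrite !uE; try lia.
- move=> i d h1 h2 h3 h4.
  have := INT i (i + d).+1 ltac:(lia) ltac:(lia) ltac:(lia).
  rewrite uE ?vE /=; try lia.
- move=> k j h1 h2 h3 h4 h5.
  have [_ t] := DTD k.+1 ltac:(lia).
  have := t j; rewrite !vE /=.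
  have -> : (k.+1 - j).-1 = (k - j)%N by lia.
  lia. lia. lia.
Qed.

Lemma CCf_CC n c : size c = n.-1 -> CCf n (ent c) -> cubic_coordinate n c.
Proof.
move=> hs [R T I D]; split=> //; split.
- move=> i /andP[h1 h2].
  case: (ltnP i n) => hin.
  + have [r1 r2] := R i ltac:(lia).
    rewrite uE; last by lia.
    split; first by lia.
    move=> j hj.
    case: (posnP j) => [->|jp]; first by rewrite addn0 uE; lia.
    case: (ltnP (i + j) n) => hij.
    * rewrite !uE; try lia.
      have := T i j ltac:(lia) ltac:(lia) ltac:(lia) ltac:(lia) ltac:(lia). lia.
    * rewrite unE //. lia.
  + have -> : i = n by lia.
    rewrite unE //; split; first by lia.
    move=> j hj; rewrite unE; lia.
- move=> i /andP[h1 h2].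
  case: (leqP i 1) => hi.
  + have -> : i = 1%N by lia.
    rewrite v1E; split; first by lia.
    move=> j hj. have -> : (1 - j = 1)%N by lia. rewrite v1E; lia.
  + have [r1 r2] := R i.-1 ltac:(lia).
    rewrite vE //; split; first by lia.
    move=> j hj.
    case: (posnP j) => [->|jp]; first by rewrite subn0 vE //; lia.
    case: (leqP (i - j) 1) => hij.
    * have -> : (i - j = 1)%N by lia. rewrite v1E. lia.
    * rewrite vE //.
      have := D i.-1 j ltac:(lia) ltac:(lia) ltac:(lia) ltac:(lia) ltac:(lia).
      have -> : (i - j).-1 = (i.-1 - j)%N by lia.
      lia.
- move=> i j h1 h2 h3.
  case: (ltnP i n) => hin; last by rewrite unE //; lia.
  rewrite uE ?vE; try lia. move=> h4.
  case: (ltnP (i.+1) j) => hj.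
  + have := I i (j.-1 - i)%N ltac:(lia) ltac:(lia) ltac:(lia) ltac:(lia).
    have -> : (i + (j.-1 - i))%N = j.-1 by lia.
    lia.
  + have -> : j.-1 = i by lia. lia.
Qed.

Lemma ent_entry c i : (1 <= i)%N -> entry c i = ent c i.
Proof. by rewrite /ent /entry; case: i. Qed.

Lemma size_set_entry c i t : (1 <= i <= size c)%N -> size (set_entry c i t) = size c.
Proof. move=> h; rewrite /set_entry size_set_nth; lia. Qed.

Lemma ent_set c i t p : (1 <= i <= size c)%N ->
  ent (set_entry c i t) p = if p == i then t else ent c p.
Proof.
move=> h; rewrite /ent /set_entry nth_set_nth /=.
case: p => [|p] /=; first by case: i h.
case: i h => [|i] //= h.
Qed.

Definition mk (n : nat) (x : nat -> int) : seq int := mkseq (fun j => x j.+1) n.-1.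

Lemma size_mk n x : size (mk n x) = n.-1.
Proof. by rewrite size_mkseq. Qed.

Lemma ent_mk n x p : (1 <= p <= n.-1)%N -> ent (mk n x) p = x p.
Proof.
move=> h; rewrite /ent /mk nth_mkseq; last by lia.
case: p h => [|p] //=.
Qed.

Lemma mk_ext n c x : size c = n.-1 -> (forall p, (1 <= p <= n.-1)%N -> ent c p = x p) -> c = mk n x.
Proof.
move=> hs hx; apply: (@eq_from_nth _ 0); first by rewrite size_mk.
move=> i hi.
rewrite hs in hi. have := hx i.+1 ltac:(lia). rewrite /ent /= => ->.
rewrite /mk nth_mkseq //; lia.
Qed.

Lemma mk_eq n x y : (forall p, (1 <= p <= n.-1)%N -> x p = y p) -> mk n x = mk n y.
Proof. move=> h; apply: mk_ext; first by rewrite size_mk. move=> p hp; rewrite ent_mk //; exact: h. Qed.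

Lemma ent_out c p : (p == 0%N) || (size c < p)%N -> ent c p = 0.
Proof. rewrite /ent; case: p => [|p] //= h. rewrite nth_default //. Qed.

Lemma find_iota_spec (P : pred nat) m :
  (exists j, (j < m)%N /\ P j) ->
  [/\ (find P (iota 0 m) < m)%N, P (find P (iota 0 m)) &
      forall j, (j < find P (iota 0 m))%N -> ~~ P j].
Proof.
case=> j [hj pj].
have hh : has P (iota 0 m).
  apply/hasP; exists j => //; rewrite mem_iota; lia.
have hlt : (find P (iota 0 m) < m)%N by rewrite has_find size_iota in hh.
split=> //.
- have := nth_find 0 hh. rewrite nth_iota //.
- move=> k hk. have := before_find 0 hk. rewrite nth_iota //; last by lia.
  by move=> ->.
Qed.

Definition SY (n : nat) (s : nat -> int) : Prop :=
  [/\ CCf n s, forall i, (1 <= i <= n.-1)%N -> s i != 0, s 0%N = 0 & forall p, (n <= p)%N -> s p = 0].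

Definition sibP (s : nat -> int) (i : nat) (j : nat) : bool :=
  ((i.+1 + j)%N%:Z + Num.max (s (i.+1 + j)%N) 0 == i%:Z + s i).
Definition sib (s : nat -> int) (i : nat) : nat :=
  i.+1 + find (sibP s i) (iota 0 (absz (s i))).

Definition tqP (s : nat -> int) (k : nat) (j : nat) : bool :=
  ((k.-1 - j)%N%:Z - Num.max (- s (k.-1 - j)%N) 0 == k%:Z + s k).
Definition tq (s : nat -> int) (k : nat) : nat :=
  k.-1 - find (tqP s k) (iota 0 (absz (s k))).

Lemma sib_spec n s i : SY n s -> (1 <= i <= n.-1)%N -> 0 < s i ->
  let K := sib s i in
  [/\ (i < K)%N, K%:Z <= i%:Z + s i, K%:Z + Num.max (s K) 0 = i%:Z + s i &
      forall k, (i < k < K)%N -> k%:Z + Num.max (s k) 0 != i%:Z + s i].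
Proof.
move=> [[R T I D] nz s0 sn] hi hpos K.
have [r1 r2] := R i hi.
have ex : exists j, (j < absz (s i))%N /\ sibP s i j.
  exists (absz (s i)).-1; split; first by lia.
  rewrite /sibP; apply/eqP.
  have -> : (i.+1 + (absz (s i)).-1)%N = (i + absz (s i))%N by lia.
  case: (ltnP (i + absz (s i)) n) => he.
  - have := T i (absz (s i)) ltac:(lia) ltac:(lia) ltac:(lia) hpos ltac:(lia). lia.
  - have -> : (i + absz (s i))%N = n by lia.
    rewrite sn //. lia.
have [h1 h2 h3] := find_iota_spec ex.
rewrite /K /sib; split.
- lia.
- lia.
- by move/eqP: h2.
- move=> k hk. have := h3 (k - i.+1)%N ltac:(lia). rewrite /sibP.
  by have -> : (i.+1 + (k - i.+1))%N = k by lia.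
Qed.

Lemma tq_spec n s k : SY n s -> (1 <= k <= n.-1)%N -> s k < 0 ->
  let q := tq s k in
  [/\ k%:Z + s k <= q%:Z, (q < k)%N, q%:Z - Num.max (- s q) 0 = k%:Z + s k &
      forall p, (q < p < k)%N -> p%:Z - Num.max (- s p) 0 != k%:Z + s k].
Proof.
move=> [[R T I D] nz s0 sn] hk hneg q.
have [r1 r2] := R k hk.
have ex : exists j, (j < absz (s k))%N /\ tqP s k j.
  exists (absz (s k)).-1; split; first by lia.
  rewrite /tqP; apply/eqP.
  have -> : (k.-1 - (absz (s k)).-1)%N = (k - absz (s k))%N by lia.
  case: (posnP (k - absz (s k))%N) => hb.
  - rewrite hb s0. lia.
  - have := D k (absz (s k)) ltac:(lia) ltac:(lia) ltac:(lia) hneg ltac:(lia). lia.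
have [h1 h2 h3] := find_iota_spec ex.
rewrite /q /tq; split.
- lia.
- lia.
- by move/eqP: h2.
- move=> p hp. have := h3 (k.-1 - p)%N ltac:(lia). rewrite /tqP.
  by have -> : (k.-1 - (k.-1 - p))%N = p by lia.
Qed.

Definition cmf (s : nat -> int) (i : nat) : int :=
  if s i < 0 then s i else (sib s i)%:Z - i%:Z - 1.
Definition cMf (s : nat -> int) (i : nat) : int :=
  if 0 < s i then s i else (tq s i)%:Z + 1 - i%:Z.

Lemma cm_pos n s i : SY n s -> (1 <= i <= n.-1)%N -> 0 < s i ->
  [/\ cmf s i = (sib s i)%:Z - i%:Z - 1, 0 <= cmf s i, cmf s i < s i & cMf s i = s i].
Proof.
move=> hS hi hp. have [h1 h2 h3 h4] := sib_spec hS hi hp.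
rewrite /cmf /cMf hp ltNge (ltW hp) /=. split=> //; lia.
Qed.

Lemma cm_neg n s i : SY n s -> (1 <= i <= n.-1)%N -> s i < 0 ->
  [/\ cmf s i = s i, cMf s i = (tq s i)%:Z + 1 - i%:Z, s i < cMf s i & cMf s i <= 0].
Proof.
move=> hS hi hp. have [h1 h2 h3 h4] := tq_spec hS hi hp.
rewrite /cmf /cMf hp ltNge (ltW hp) /=. split=> //; lia.
Qed.

Lemma SY_sign n s i : SY n s -> (1 <= i <= n.-1)%N -> (0 < s i) \/ (s i < 0).
Proof. case=> _ nz _ _ hi. have := nz i hi. lia. Qed.

Definition corner (n : nat) (s x : nat -> int) : Prop :=
  forall i, (1 <= i <= n.-1)%N -> x i = cmf s i \/ x i = cMf s i.

Lemma corner_CCf n s x : SY n s -> corner n s x -> CCf n x.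
Proof.
move=> hS hx. have hS' := hS. case: hS' => [[R T I D] nz s0 sn].
have bnd : forall i, (1 <= i <= n.-1)%N ->
   (0 < s i /\ 0 <= x i /\ x i <= s i) \/ (s i < 0 /\ s i <= x i /\ x i <= 0).
  move=> i hi. case: (SY_sign hS hi) => h.
  - have [a b c d] := cm_pos hS hi h. left. case: (hx i hi); lia.
  - have [a b c d] := cm_neg hS hi h. right. case: (hx i hi); lia.
split.
- move=> i hi. have [r1 r2] := R i hi. case: (bnd i hi); lia.
- move=> i j h1 h2 h3 h4 h5.
  have bi := bnd i ltac:(lia). have bp := bnd (i + j)%N ltac:(lia).
  have spos : 0 < s i by lia.
  case: (SY_sign hS (i := (i + j)%N) _) => [|hpn|hpn]; first by lia.
  2: lia.
  have Ts := T i j h1 h2 h3 spos ltac:(lia).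
  have [c1 c2 c3 c4] := cm_pos hS (i := i) ltac:(lia) spos.
  case: (hx i ltac:(lia)) => hxi; last by lia.
  have [k1 k2 k3 k4] := sib_spec hS (i := i) ltac:(lia) spos.
  have k5 := k4 (i + j)%N ltac:(lia).
  suff : (i + j)%N%:Z + s (i + j)%N < (sib s i)%:Z by lia.
  rewrite ltNge; apply/negP => hc.
  have [r1 r2] := R i ltac:(lia).
  have Tp := T (i + j)%N (sib s i - (i + j))%N ltac:(lia) ltac:(lia) ltac:(lia) hpn ltac:(lia).
  have ee : (i + j + (sib s i - (i + j)))%N = sib s i by lia.
  rewrite ee in Tp.
  lia.
- move=> i d h1 h2 h3 h4.
  have bi := bnd i ltac:(lia). have bp := bnd (i + d)%N ltac:(lia).
  have := I i d h1 h2 h3 ltac:(lia). lia.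
- move=> k j h1 h2 h3 h4 h5.
  have bk := bnd k ltac:(lia). have bp := bnd (k - j)%N ltac:(lia).
  have sneg : s k < 0 by lia.
  case: (SY_sign hS (i := (k - j)%N) _) => [|hpn|hpn]; first by lia.
  lia.
  have [c1 c2 c3 c4] := cm_neg hS (i := k) ltac:(lia) sneg.
  have [r1 r2] := R k ltac:(lia).
  case: (hx k ltac:(lia)) => hxk.
  + have := D k j h1 h2 h3 sneg ltac:(lia). lia.
  have [q1 q2 q3 q4] := tq_spec hS (k := k) ltac:(lia) sneg.
  have Ds := D k j h1 h2 h3 sneg ltac:(lia).
  have q5 := q4 (k - j)%N ltac:(lia).
  suff : (tq s k)%:Z + 1 <= (k - j)%N%:Z + s (k - j)%N by lia.
  rewrite leNgt; apply/negP => hc.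
  have Dp := D (k - j)%N (k - j - tq s k)%N ltac:(lia) ltac:(lia) ltac:(lia) hpn ltac:(lia).
  have ee : (k - j - (k - j - tq s k))%N = tq s k by lia.
  rewrite ee in Dp.
  lia.
Qed.

Lemma inter_notCC n s k y t : SY n s -> (1 <= k <= n.-1)%N ->
  (forall j, (1 <= j <= n.-1)%N -> (k < j)%N -> y j = cMf s j) ->
  (forall j, (1 <= j <= n.-1)%N -> (j < k)%N -> y j = cmf s j) ->
  y k = t -> cmf s k < t -> t < cMf s k -> ~ CCf n y.
Proof.
move=> hS hk hgt hlt hyk h1 h2 [R T I D].
have hS' := hS. case: hS' => [[Rs Ts Is Ds] nz s0 sn].
have [r1 r2] := Rs k hk.
case: (SY_sign hS hk) => hs.
- have [c1 c2 c3 c4] := cm_pos hS hk hs.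
  have [k1 k2 k3 k4] := sib_spec hS hk hs.
  set K := sib s k in c1 k1 k2 k3 k4.
  have hK : (1 <= K <= n.-1)%N by lia.
  have sK : 0 < s K by lia.
  have [d1 d2 d3 d4] := cm_pos hS hK sK.
  have yK := hgt K hK k1.
  have := T k (K - k)%N ltac:(lia) ltac:(lia) ltac:(lia) ltac:(lia) ltac:(lia).
  have ee : (k + (K - k))%N = K by lia.
  rewrite ee. lia.
- have [c1 c2 c3 c4] := cm_neg hS hk hs.
  have [q1 q2 q3 q4] := tq_spec hS hk hs.
  set q := tq s k in c2 q1 q2 q3 q4.
  have hq : (1 <= q <= n.-1)%N by lia.
  have sq : s q < 0 by lia.
  have [d1 d2 d3 d4] := cm_neg hS hq sq.
  have yq := hlt q hq q2.
  have := D k (k - q)%N ltac:(lia) ltac:(lia) ltac:(lia) ltac:(lia) ltac:(lia).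
  have ee : (k - (k - q))%N = q by lia.
  rewrite ee. lia.
Qed.

Definition ycorner (s : nat -> int) (m i : nat) : int := if (m <= i)%N then cMf s i else cmf s i.

Lemma ycorner_corner n s m : corner n s (ycorner s m).
Proof. move=> i hi; rewrite /ycorner; case: (m <= i)%N; [right|left]; done. Qed.

Lemma cc_of_corner n s x : SY n s -> corner n s x -> cubic_coordinate n (mk n x).
Proof.
move=> hS hx; apply: CCf_CC; first by rewrite size_mk.
have hC := corner_CCf hS hx.
case: hC => [R T I D]; split.
- move=> i hi; rewrite ent_mk //; exact: R.
- move=> i j h1 h2 h3; rewrite !ent_mk; try lia. exact: T.
- move=> i d h1 h2 h3; rewrite !ent_mk; try lia. exact: I.
- move=> k j h1 h2 h3; rewrite !ent_mk; try lia. exact: D.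
Qed.

Lemma CCf_ext n f g : (forall p, (1 <= p <= n.-1)%N -> f p = g p) -> CCf n f -> CCf n g.
Proof.
move=> e [R T I D]; split.
- move=> i hi; rewrite -e //; exact: R.
- move=> i j h1 h2 h3; rewrite -!e; try lia. exact: T.
- move=> i d h1 h2 h3; rewrite -!e; try lia. exact: I.
- move=> k j h1 h2 h3; rewrite -!e; try lia. exact: D.
Qed.

Lemma step_up n s k : SY n s -> (1 <= k <= n.-1)%N ->
  up_rel n (mk n (ycorner s k.+1)) k (mk n (ycorner s k)).
Proof.
move=> hS hk.
have hsz : (1 <= k <= size (mk n (ycorner s k.+1)))%N by rewrite size_mk.
have hent : entry (mk n (ycorner s k.+1)) k = cmf s k.
  rewrite ent_entry ?ent_mk /ycorner; try lia. by rewrite ltnn.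
have hlt : cmf s k < cMf s k.
  case: (SY_sign hS hk) => h.
  - have [c1 c2 c3 c4] := cm_pos hS hk h. lia.
  - have [c1 c2 c3 c4] := cm_neg hS hk h. lia.
exists (cMf s k); split.
- symmetry; apply: mk_ext; first by rewrite size_set_entry // size_mk.
  move=> p hp; rewrite ent_set // ent_mk // /ycorner.
  case: eqP => [->|hne]; first by rewrite leqnn.
  have [hh|hh] : (k < p)%N \/ (p < k)%N by lia.
  + by rewrite hh (ltnW hh).
  + have -> : (k.+1 <= p)%N = false by lia.
    by have -> : (k <= p)%N = false by lia.
- by rewrite hent.
- exact: (cc_of_corner hS (@ycorner_corner n s k)).
- move=> t h1 h2 hc.
  have [hs' hC] := CC_CCf hc.
  rewrite hent in h1.
  apply: (inter_notCC hS hk _ _ _ h1 h2 hC).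
  + move=> j hj hkj. rewrite ent_set // ent_mk // /ycorner.
    have -> : (j == k) = false by apply/eqP; lia.
    by rewrite hkj.
  + move=> j hj hkj. rewrite ent_set // ent_mk // /ycorner.
    have -> : (j == k) = false by apply/eqP; lia.
    have -> : (k.+1 <= j)%N = false by lia. done.
  + by rewrite ent_set // eqxx.
Qed.

Lemma chain n s k : SY n s -> (k <= n.-1)%N ->
  ups n (mk n (ycorner s k.+1)) k (mk n (ycorner s 1)).
Proof.
move=> hS; elim: k => [|k IH] hk /=; first by [].
exists (mk n (ycorner s k.+1)); split.
- apply: step_up => //; lia.
- apply: IH; lia.
Qed.

Lemma mk_ycorner_n n s : mk n (ycorner s n) = mk n (cmf s).
Proof.
apply: mk_eq => p hp; rewrite /ycorner.
by have -> : (n <= p)%N = false by lia.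
Qed.

Lemma mk_ycorner_1 n s : mk n (ycorner s 1) = mk n (cMf s).
Proof.
apply: mk_eq => p hp; rewrite /ycorner.
by have -> : (1 <= p)%N = true by lia.
Qed.

Lemma cell_of_SY n s : (1 <= n)%N -> SY n s -> is_cell n (mk n (cmf s)) (mk n (cMf s)).
Proof.
move=> hn hS; split.
- split.
  + exact: (cc_of_corner hS (fun i _ => or_introl erefl)).
  + move=> i hi. exists (cMf s i).
    have hsz : (1 <= i <= size (mk n (cmf s)))%N by rewrite size_mk.
    split.
    * rewrite ent_entry ?ent_mk; try lia.
      case: (SY_sign hS hi) => h.
      -- have [c1 c2 c3 c4] := cm_pos hS hi h. lia.
      -- have [c1 c2 c3 c4] := cm_neg hS hi h. lia.
    * apply: CCf_CC; first by rewrite size_set_entry // size_mk.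
      apply: (@CCf_ext n (fun p => if p == i then cMf s p else cmf s p)).
      -- move=> p hp; rewrite ent_set // ent_mk //.
         by case: eqP => [->|].
      -- apply: (corner_CCf hS) => p hp.
         by case: (p == i); [right|left].
- rewrite /maximal_correspondent -mk_ycorner_n -mk_ycorner_1.
  have := @chain n s n.-1 hS (leqnn _).
  by have -> : n.-1.+1 = n by lia.
Qed.

Lemma Gamma_mk n s : SY n s -> Gamma (mk n (cmf s)) (mk n (cMf s)) = mk n s.
Proof.
move=> hS.
apply: (@eq_from_nth _ 0).
- by rewrite /Gamma size_map size_zip !size_mk minnn.
- move=> i; rewrite /Gamma size_map size_zip !size_mk minnn => hi.
  rewrite (nth_map (0, 0)); last by rewrite size_zip !size_mk minnn.
  rewrite nth_zip ?size_mk //= /mk !nth_mkseq //.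
  have hi' : (1 <= i.+1 <= n.-1)%N by lia.
  rewrite /gamma.
  case: (SY_sign hS hi') => h.
  + have [c1 c2 c3 c4] := cm_pos hS hi' h.
    have -> : (cmf s i.+1 < 0) = false by lia. done.
  + have [c1 c2 c3 c4] := cm_neg hS hi' h.
    by rewrite c1 h.
Qed.

Lemma up_rel_det n c i d1 d2 : up_rel n c i d1 -> up_rel n c i d2 -> d1 = d2.
Proof.
case=> t1 [e1 l1 c1 m1] [t2 [e2 l2 c2 m2]].
case: (ltgtP t1 t2) => h.
- by exfalso; apply: (m2 t1 l1 h); rewrite -e1.
- by exfalso; apply: (m1 t2 l2 h); rewrite -e2.
- by rewrite e1 e2 h.
Qed.

Lemma ups_det n k : forall c d1 d2, ups n c k d1 -> ups n c k d2 -> d1 = d2.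
Proof.
elim: k => [|k IH] c d1 d2 /=; first by move=> -> ->.
case=> e1 [u1 r1] [e2 [u2 r2]].
have ee := up_rel_det u1 u2. subst e2.
exact: IH r1 r2.
Qed.

Fixpoint Saux (n : nat) (f : nat -> int) (fuel p : nat) : int :=
  match fuel with
  | 0 => 0
  | fuel'.+1 => if (p == 0%N) || (n <= p)%N then 0
               else if f p < 0 then f p
               else f p + 1 + Num.max (Saux n f fuel' (p + absz (f p)).+1) 0
  end.

Definition Sf n f p := Saux n f n.+1 p.

Lemma Saux_fuel n f : forall fuel1 fuel2 p, (n - p < fuel1)%N -> (n - p < fuel2)%N ->
  Saux n f fuel1 p = Saux n f fuel2 p.
Proof.
elim=> [|fu1 IH] [|fu2] p h1 h2 //=.
case: ((p == 0%N) || (n <= p)%N) /orP => [//|hp].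
case: (f p < 0) => //.
rewrite (IH fu2) //; lia.
Qed.

Lemma Sf_eq n f p : Sf n f p = if (p == 0%N) || (n <= p)%N then 0
               else if f p < 0 then f p
               else f p + 1 + Num.max (Sf n f (p + absz (f p)).+1) 0.
Proof.
rewrite /Sf /=.
case: ((p == 0%N) || (n <= p)%N) /orP => [//|hp].
case: (f p < 0) => //.
rewrite (@Saux_fuel n f n n.+1) //; lia.
Qed.

Section B.
Variables (n : nat) (f : nat -> int).
Hypothesis hC : CCf n f.
Hypothesis ha : forall i, (1 <= i <= n.-1)%N -> 0 <= f i -> f i < n%:Z - i%:Z.
Hypothesis hb : forall i, (1 <= i <= n.-1)%N -> 1 <= f i -> (i + absz (f i) <= n.-1)%N ->
   - f i <= f (i + absz (f i))%N.
Hypothesis hc : forall i k, (1 <= i)%N -> (i < k)%N -> (k <= n.-1)%N -> 0 < f i ->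
   (k - i)%N%:Z <= f i -> 0 <= f k -> f k < f i - (k - i)%N%:Z.

Local Notation s := (Sf n f).
Local Notation E p := (p%:Z + Num.max (Sf n f p) 0).
Local Notation nx p := (p + absz (f p)).+1.

Lemma s_out p : (p == 0%N) || (n <= p)%N -> s p = 0.
Proof. by move=> h; rewrite Sf_eq h. Qed.

Lemma s_neg p : (1 <= p <= n.-1)%N -> f p < 0 -> s p = f p.
Proof.
move=> hp h; rewrite Sf_eq h.
by have -> : (p == 0%N) || (n <= p)%N = false by lia.
Qed.

Lemma s_pos p : (1 <= p <= n.-1)%N -> 0 <= f p ->
  s p = f p + 1 + Num.max (s (nx p)) 0.
Proof.
move=> hp h; rewrite Sf_eq.
have -> : (p == 0%N) || (n <= p)%N = false by lia.
by have -> : (f p < 0) = false by lia.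
Qed.

Lemma nx_le p : (1 <= p <= n.-1)%N -> 0 <= f p -> (nx p <= n)%N.
Proof. move=> hp h; have := ha hp h; lia. Qed.

Lemma E_nx p : (1 <= p <= n.-1)%N -> 0 <= f p -> E p = E (nx p).
Proof. move=> hp h; rewrite (s_pos hp h); lia. Qed.

Lemma E_le_n : forall m p, (n - p <= m)%N -> (p <= n)%N -> E p <= n%:Z.
Proof.
elim=> [|m IH] p h1 h2.
- have -> : p = n by lia. rewrite s_out ?leqnn ?orbT //. lia.
- case: (boolP ((p == 0%N) || (n <= p)%N)) => hp.
  + rewrite s_out //. lia.
  + case: (ltP (f p) 0) => hf.
    * rewrite s_neg //; lia.
    * rewrite E_nx; try lia.
      apply: IH; first by lia.
      apply: nx_le; lia.
Qed.

Lemma E_le_n' p : (p <= n)%N -> E p <= n%:Z.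
Proof. move=> h; apply: (@E_le_n n p) => //; lia. Qed.

Lemma Inner p : (1 <= p <= n.-1)%N -> 0 <= f p ->
  forall m, (p < m < nx p)%N -> E m <= (nx p).-1%:Z /\ (f m < 0 -> - (m - p)%N%:Z <= f m).
Proof.
move=> hp hfp.
have hnx := nx_le hp hfp.
suff : forall d m, (nx p - m <= d)%N -> (p < m < nx p)%N ->
   E m <= (nx p).-1%:Z /\ (f m < 0 -> - (m - p)%N%:Z <= f m).
  move=> H m hm; exact: (H (nx p - m)%N).
elim=> [|d IH] m hd hm; first by lia.
have hm' : (1 <= m <= n.-1)%N by lia.
case: (ltP (f m) 0) => hfm.
- rewrite s_neg //; split; first by lia.
  move=> _.
  case: (ltnP (m - p) (absz (f p))) => hd2.
  + have [R T I D] := hC.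
    have := I p (m - p)%N ltac:(lia) ltac:(lia) ltac:(lia) ltac:(lia).
    have ee : (p + (m - p))%N = m by lia. rewrite ee. lia.
  + have ee : m = (p + absz (f p))%N by lia.
    have := hb hp ltac:(lia) ltac:(lia). rewrite -ee. lia.
- split; last by lia.
  have := hc (i := p) (k := m) ltac:(lia) ltac:(lia) ltac:(lia) ltac:(lia) ltac:(lia) hfm => hcm.
  rewrite E_nx //.
  have := IH (nx m) ltac:(lia) ltac:(lia). case=> h _. exact: h.
Qed.

Lemma E_ge q : q%:Z <= E q.
Proof. lia. Qed.

Lemma Nest : forall d p, (n - p <= d)%N -> (1 <= p <= n.-1)%N -> 0 <= f p ->
  forall m, (p < m)%N -> m%:Z <= E p ->
  E m <= E p /\ (m%:Z < E p -> f m < 0 -> - (m - p)%N%:Z <= f m).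
Proof.
elim=> [|d IH] p hd hp hfp m hm1 hm2; first by lia.
have hnx := nx_le hp hfp.
have hE := E_nx hp hfp.
case: (ltngtP m (nx p)) => hmn.
- have [h1 h2] := Inner hp hfp (m := m) ltac:(lia).
  have := E_ge (nx p). split; first by lia. move=> _; exact: h2.
-
  have hnx2 : (nx p < n)%N.
    case: (ltnP (nx p) n) => // hh.
    have ee : nx p = n by lia.
    rewrite hE ee s_out ?leqnn ?orbT // in hm2. lia.
  have hfn : 0 <= f (nx p).
    case: (ltP (f (nx p)) 0) => // hh.
    rewrite hE s_neg // in hm2; lia.
  have [h1 h2] := IH (nx p) ltac:(lia) ltac:(lia) hfn m hmn ltac:(lia).
  split; first by lia.
  move=> h3 h4. have := h2 ltac:(lia) h4. lia.
- subst m. split; first by lia.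
  move=> h3 h4.
  case: (ltnP (nx p) n) => hh.
  + rewrite hE s_neg // in h3; lia.
  + have ee : nx p = n by lia.
    rewrite hE ee s_out ?leqnn ?orbT // in h3. lia.
Qed.

Lemma Nest' p : (1 <= p <= n.-1)%N -> 0 <= f p ->
  forall m, (p < m)%N -> m%:Z <= E p ->
  E m <= E p /\ (m%:Z < E p -> f m < 0 -> - (m - p)%N%:Z <= f m).
Proof. exact: (@Nest (n - p)%N p (leqnn _)). Qed.

Lemma SY_S : SY n s.
Proof.
have [R T I D] := hC.
have sgn : forall i, (1 <= i <= n.-1)%N -> (f i < 0 /\ s i = f i) \/ (0 <= f i /\ 0 < s i).
  move=> i hi. case: (ltP (f i) 0) => h.
  - left; split => //; exact: s_neg.
  - right; split => //; rewrite s_pos //; lia.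
split.
- split.
  + move=> i hi. have [r1 r2] := R i hi.
    case: (sgn i hi) => [[h1 h2]|[h1 h2]]; first by lia.
    have := @E_le_n' i ltac:(lia). lia.
  + move=> i j h1 h2 h3 h4 h5.
    case: (sgn i ltac:(lia)) => [[a1 a2]|[a1 a2]]; first by lia.
    case: (sgn (i + j)%N ltac:(lia)) => [[b1 b2]|[b1 b2]]; first by lia.
    have [k1 _] := Nest' (p := i) ltac:(lia) a1 (m := (i + j)%N) ltac:(lia) ltac:(lia).
    lia.
  + move=> i d h1 h2 h3 h4.
    case: (sgn i ltac:(lia)) => [[a1 a2]|[a1 a2]]; first by lia.
    case: (sgn (i + d)%N ltac:(lia)) => [[b1 b2]|[b1 b2]]; last by lia.
    have [_ k2] := Nest' (p := i) ltac:(lia) a1 (m := (i + d)%N) ltac:(lia) ltac:(lia).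
    have := k2 ltac:(lia) b1.
    have ee : (i + d - i)%N = d by lia. rewrite ee. lia.
  + move=> k j h1 h2 h3 h4 h5.
    case: (sgn k ltac:(lia)) => [[a1 a2]|[a1 a2]]; last by lia.
    case: (sgn (k - j)%N ltac:(lia)) => [[b1 b2]|[b1 b2]]; last by lia.
    have := D k j h1 h2 h3 ltac:(lia) ltac:(lia). lia.
- move=> i hi. case: (sgn i hi) => [[h1 h2]|[h1 h2]]; apply/eqP; lia.
- by rewrite s_out.
- move=> p hp; apply: s_out; by rewrite hp orbT.
Qed.

Lemma cmf_S i : (1 <= i <= n.-1)%N -> cmf s i = f i.
Proof.
move=> hi.
case: (ltP (f i) 0) => hf.
- by rewrite /cmf s_neg // hf.
- have hs : 0 < s i by rewrite s_pos //; lia.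
  have [c1 c2 c3 c4] := cm_pos SY_S hi hs.
  rewrite c1.
  have [k1 k2 k3 k4] := sib_spec SY_S hi hs.
  set K := sib s i in c1 k1 k2 k3 k4 *.
  have hE := E_nx hi hf.
  have hnx := nx_le hi hf.
  suff : K = nx i by move=> ->; lia.
  case: (ltngtP K (nx i)) => // hK.
  + have [h1 _] := Inner hi hf (m := K) ltac:(lia). lia.
  + have h := k4 (nx i) ltac:(lia). exfalso; move/eqP: h; apply. lia.
Qed.

End B.

Lemma mc_facts n c : minimal_cellular n c ->
  [/\ size c = n.-1, CCf n (ent c),
   (forall i, (1 <= i <= n.-1)%N -> 0 <= ent c i -> ent c i < n%:Z - i%:Z),
   (forall i, (1 <= i <= n.-1)%N -> 1 <= ent c i -> (i + absz (ent c i) <= n.-1)%N ->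
      - ent c i <= ent c (i + absz (ent c i))%N) &
   (forall i k, (1 <= i)%N -> (i < k)%N -> (k <= n.-1)%N -> 0 < ent c i ->
      (k - i)%N%:Z <= ent c i -> 0 <= ent c k -> ent c k < ent c i - (k - i)%N%:Z)].
Proof.
case=> hcc hup.
have [hs hC] := CC_CCf hcc.
split=> //.
- move=> i hi h0.
  have [t [ht hct]] := hup i hi.
  have hsz : (1 <= i <= size c)%N by rewrite hs.
  have [_ [R _ _ _]] := CC_CCf hct.
  have := R i hi. rewrite ent_set // eqxx. rewrite ent_entry in ht; last by lia.
  lia.
- move=> i hi h1 h2.
  have [t [ht hct]] := hup i hi.
  have hsz : (1 <= i <= size c)%N by rewrite hs.
  have [_ [_ _ I _]] := CC_CCf hct.
  rewrite ent_entry in ht; last by lia.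
  have := I i (absz (ent c i)) ltac:(lia) ltac:(lia) h2.
  rewrite !ent_set // eqxx.
  have -> : ((i + absz (ent c i))%N == i) = false by apply/eqP; lia.
  move=> H; have := H ltac:(lia). lia.
- move=> i k h1 h2 h3 h4 h5 h6.
  have [t [ht hct]] := hup k ltac:(lia).
  have hsz : (1 <= k <= size c)%N by rewrite hs; lia.
  have [_ [_ T _ _]] := CC_CCf hct.
  rewrite ent_entry in ht; last by lia.
  have := T i (k - i)%N h1 ltac:(lia) ltac:(lia).
  rewrite !ent_set //.
  have -> : (i == k) = false by apply/eqP; lia.
  have ee : (i + (k - i))%N = k by lia.
  rewrite ee eqxx => H. have := H h4 h5. lia.
Qed.

Lemma cell_char n cm cM : (1 <= n)%N -> is_cell n cm cM ->
  let s := Sf n (ent cm) in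
  [/\ SY n s, cm = mk n (cmf s) & cM = mk n (cMf s)].
Proof.
move=> hn [hmc hmax] s.
have [hs hC ha hb hc] := mc_facts hmc.
have hS : SY n s := SY_S hC ha hb hc.
have hcm : cm = mk n (cmf s).
  apply: mk_ext => // p hp. by rewrite /s cmf_S.
split=> //.
have [_ hmax'] := cell_of_SY hn hS.
rewrite /maximal_correspondent -hcm in hmax'.
exact: ups_det hmax hmax'.
Qed.

Lemma sync_mk n s : SY n s -> synchronized n (mk n s).
Proof.
move=> hS. have hS' := hS. case: hS' => [hC nz _ _].
split.
- apply: CCf_CC; first by rewrite size_mk.
  apply: (CCf_ext (f := s)) => // p hp. by rewrite ent_mk.
- move=> i hi. rewrite ent_entry ?ent_mk //; try lia. exact: nz.
Qed.

Lemma SY_ext n s1 s2 : SY n s1 -> SY n s2 -> mk n s1 = mk n s2 -> s1 = s2.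
Proof.
move=> [_ _ a0 an] [_ _ b0 bn] e.
apply: functional_extensionality => p.
case: (boolP ((p == 0%N) || (n <= p)%N)) => hp.
- case/orP: hp => hp; first by rewrite (eqP hp) a0 b0.
  by rewrite an // bn.
- have hp' : (1 <= p <= n.-1)%N by lia.
  by rewrite -(ent_mk s1 hp') -(ent_mk s2 hp') e.
Qed.

Theorem theorem4p8 (n : nat) (hn : (1 <= n)%N) :
  (* Gamma maps cells of size n into synchronized cubic coordinates *)
  (forall cm cM : seq int, is_cell n cm cM -> synchronized n (Gamma cm cM)) /\
  (* injective on cells *)
  (forall cm cM cm' cM' : seq int, is_cell n cm cM -> is_cell n cm' cM' ->
     Gamma cm cM = Gamma cm' cM' -> cm = cm' /\ cM = cM') /\
  (* surjective onto synchronized cubic coordinates *)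
  (forall c : seq int, synchronized n c ->
     exists cm cM : seq int, is_cell n cm cM /\ Gamma cm cM = c).
Proof.
split; [|split].
- move=> cm cM hcell.
  have [hS e1 e2] := cell_char hn hcell.
  rewrite e1 e2 Gamma_mk //. exact: sync_mk.
- move=> cm cM cm' cM' h1 h2 hG.
  have [hS e1 e2] := cell_char hn h1.
  have [hS' e1' e2'] := cell_char hn h2.
  rewrite e1 e2 e1' e2' !Gamma_mk // in hG.
  have hh := SY_ext hS hS' hG.
  by rewrite e1 e2 e1' e2' hh.
- move=> c [hcc hnz].
  have [hs hC] := CC_CCf hcc.
  have hS : SY n (ent c).
    split=> //.
    + move=> i hi. rewrite -ent_entry; last by lia. exact: hnz.
    + move=> p hp; apply: ent_out; rewrite hs; lia.
  exists (mk n (cmf (ent c))), (mk n (cMf (ent c))); split.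
  + exact: cell_of_SY.
  + rewrite Gamma_mk //. symmetry; apply: mk_ext => //.
Qed.
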